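(* Let $n\ge 2$, $2\le r\le n$, $\lambda\ge1$ and $1\le k\le n-1$ be integers, and let $\mathcal{B}=\{B_1,\dots,B_{N^*}\}$ be a balanced incomplete block design $S_\lambda(2,r,n)$ on $I_n=\{1,\dots,n\}$ (blocks are $r$-element subsets of $I_n$, and every 2-element subset of $I_n$ is contained in exactly $\lambda$ blocks; $N^*=\lambda n(n-1)/(r(r-1))$). For $A\subseteq I_n$ with $|A|=n-k$ put $T(A)=\sum_{B\in\mathcal{B}:\,|B\cap A|\ge 2}(|B\cap A|-1)$ and $T=\max_{A\subseteq I_n,\,|A|=n-k}T(A)$. If $q$ is a prime power with $q>\binom{n}{k}TM$, where $M=\frac{\lambda n(n-1)}{r}-T$, then there exists a linear $(n,k,d)=(n,k,n-1)$ exact-repair regenerating code over $\mathbb{F}_q$ with $$\alpha=\frac{\lambda(n-1)}{r-1},\qquad \beta=\lambda,\qquad M=\frac{\lambda n(n-1)}{r}-T,$$ which has uncoded repair: when a node fails, each of the $n-1$ remaining nodes sends exactly $\lambda$ of its stored symbols, unchanged.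
   Context: A linear $(n,k,d)$ exact-repair regenerating code over $\mathbb{F}_q$ with parameters $(\alpha,\beta,M)$ stores on each of $n$ nodes $\alpha$ symbols of $\mathbb{F}_q$, each a linear function of a message in $\mathbb{F}_q^M$, such that (i) the message can be recovered from the contents of any $k$ nodes, and (ii) for any node $j$ and any set $A$ of $d$ other nodes, each node in $A$ sends $\beta$ symbols computed from its own content, and from the $d\beta$ received symbols the exact content of node $j$ can be reconstructed. *)

(* Defs.v *)
From HB Require Import structures.
From mathcomp Require Import all_boot all_order all_algebra all_field.
Set Implicit Arguments. Unset Strict Implicit. Unset Printing Implicit Defensive.
Import GRing.Theory.
Local Open Scope ring_scope.

(** ** Balanced incomplete block designs S_lambda(2, r, n) on 'I_n (= I_n, 0-based).
    Blocks form a sequence (repetitions allowed, i.e. a multiset B_1..B_N). *)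
Definition is_BIBD (n lam r : nat) (blocks : seq {set 'I_n}) : Prop :=
  (forall B, B \in blocks -> #|B| = r) /\
  (forall x y : 'I_n, x != y ->
     count (fun B : {set 'I_n} => (x \in B) && (y \in B)) blocks = lam).

Definition TA (n : nat) (blocks : seq {set 'I_n}) (A : {set 'I_n}) : nat :=
  (\sum_(B <- blocks | 1 < #|B :&: A|) (#|B :&: A| - 1))%N.

Definition Tmax (n k : nat) (blocks : seq {set 'I_n}) : nat :=
  (\max_(A : {set 'I_n} | #|A| == n - k) TA blocks A)%N.

Definition alpha_par (n r lam : nat) : nat := ((lam * (n - 1)) %/ (r - 1))%N.
Definition M_par (n r lam k : nat) (blocks : seq {set 'I_n}) : nat :=
  ((lam * n * (n - 1)) %/ r - Tmax k blocks)%N.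

Section Codes.
Variables (F : fieldType) (n M alpha : nat).

Definition content (G : 'I_n -> 'M[F]_(M, alpha)) (m : 'rV[F]_M) (i : 'I_n)
  : 'rV[F]_alpha := m *m G i.

Definition recoverable (k : nat) (G : 'I_n -> 'M[F]_(M, alpha)) : Prop :=
  forall K : {set 'I_n}, #|K| = k ->
  forall m m' : 'rV[F]_M,
    (forall i, i \in K -> content G m i = content G m' i) -> m = m'.

Definition linear_repairable (d beta : nat) (G : 'I_n -> 'M[F]_(M, alpha)) : Prop :=
  forall (j : 'I_n) (A : {set 'I_n}), #|A| = d -> j \notin A ->
  exists H : 'I_n -> 'M[F]_(alpha, beta),
  forall m m' : 'rV[F]_M,
    (forall i, i \in A -> content G m i *m H i = content G m' i *m H i) ->
    content G m j = content G m' j.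

Definition regenerating_code (k d beta : nat) (G : 'I_n -> 'M[F]_(M, alpha)) : Prop :=
  recoverable k G /\ linear_repairable d beta G.

Definition uncoded_repair (d beta : nat) (G : 'I_n -> 'M[F]_(M, alpha)) : Prop :=
  forall (j : 'I_n) (A : {set 'I_n}), #|A| = d -> j \notin A ->
  exists sel : 'I_n -> 'I_beta -> 'I_alpha,
    (forall i, injective (sel i)) /\
    forall m m' : 'rV[F]_M,
      (forall i, i \in A -> forall t : 'I_beta,
          content G m i 0 (sel i t) = content G m' i 0 (sel i t)) ->
      content G m j = content G m' j.
End Codes.

(* Main.v *)
Require Import Defs.
From HB Require Import structures.
From mathcomp Require Import all_boot all_order all_algebra all_field.
From mathcomp Require Import zify.
Set Implicit Arguments. Unset Strict Implicit. Unset Printing Implicit Defensive.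
Import GRing.Theory.
Section Greedy.
Local Open Scope ring_scope.

Lemma card_bigcup_le (T I : finType) (P : pred I) (S : I -> {set T}) :
  (#|\bigcup_(i | P i) S i| <= \sum_(i | P i) #|S i|)%N.
Proof.
elim/big_rec2: _ => [|i s U _ IH]; first by rewrite cards0.
apply: leq_trans (leq_card_setU _ _).1 _; by rewrite leq_add2l.
Qed.

Lemma greedy (F : finFieldType) (I : finType) (D M : nat)
  (W : I -> {set 'rV[F]_D}) :
  (forall i a x, x \in W i -> a *: x \in W i) ->
  (forall s, (s < M)%N -> (\sum_i #|F| ^ s * #|W i| < #|F| ^ D)%N) ->
  exists E : 'M[F]_(M, D), forall i (u : 'rV[F]_M), u *m E \in W i -> u = 0.
Proof.
move=> WZ; elim: M => [|M IH] Hs.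
  by exists 0 => i u _; apply: thinmx0.
have [E HE] := IH (fun s hs => Hs s (ltnW hs)).
pose S i := [set x.1 *m E + x.2 | x in setX [set: 'rV[F]_M] (W i)].
have cardS i : (#|S i| <= #|F| ^ M * #|W i|)%N.
  apply: leq_trans (leq_imset_card _ _) _.
  by rewrite cardsX cardsT card_mx mul1n.
have : (#|\bigcup_(i | true) S i| < #|[set: 'rV[F]_D]|)%N.
  apply: leq_ltn_trans (card_bigcup_le _ _) _.
  rewrite cardsT card_mx mul1n.
  apply: leq_ltn_trans (Hs M (ltnSn _)).
  by apply: leq_sum => i _.
move=> Hlt.
have [e He] : exists e, e \notin \bigcup_(i | true) S i.
  apply/existsP; rewrite -negb_forall; apply/negP => /forallP Hall.
  have : [set: 'rV[F]_D] \subset \bigcup_(i | true) S i.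
    by apply/subsetP => x _; have := Hall x.
  by move/subset_leq_card; rewrite leqNgt Hlt.
exists (col_mx e E) => i u Hu.
pose a : 'rV[F]_1 := lsubmx (u : 'M_(1, 1 + M)).
pose u1 : 'rV[F]_M := rsubmx (u : 'M_(1, 1 + M)).
have uE : u = row_mx a u1 by rewrite hsubmxK.
have {}Hu : a *m e + u1 *m E \in W i by rewrite -mul_row_col -uE.
rewrite uE.
have [a0|an0] := eqVneq (a 0 0) 0.
  have ha : a = 0 by apply/rowP => j; rewrite ord1 a0 mxE.
  rewrite ha mul0mx add0r in Hu.
  by rewrite ha (HE _ _ Hu) row_mx0.
exfalso; move/negP: He; apply; apply/bigcupP; exists i => //.
apply/imsetP.
exists ((- (a 0 0)^-1) *: u1, (a 0 0)^-1 *: (a *m e + u1 *m E)).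
  by rewrite in_setX in_setT /=; apply: WZ.
rewrite /= -scalemxAl scalerDr.
have -> : a *m e = a 0 0 *: e.
  apply/matrixP => i' j. rewrite !mxE big_ord1. rewrite (ord1 i'). rewrite /a mxE. done.
by rewrite scalerA mulVf // scale1r scaleNr addrCA addNr addr0.
Qed.
End Greedy.

Section Count.
Variables (n : nat) (blocks : seq {set 'I_n}).
Local Notation N := (size blocks).
Definition Bk (b : 'I_N) := nth set0 blocks b.
Definition Lst (x : 'I_n) : seq 'I_N := [seq b <- enum 'I_N | x \in Bk b].

Lemma count_ord (P : pred {set 'I_n}) : count P blocks = \sum_(b < N | P (Bk b)) 1.
Proof. by rewrite -sum1_count (big_nth set0) big_mkord. Qed.

Lemma count_enum (Q : pred 'I_N) : count Q (enum 'I_N) = \sum_(b < N | Q b) 1.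
Proof. by rewrite -sum1_count big_enum_cond. Qed.

Lemma TA_ord A : TA blocks A = \sum_(b < N) (#|Bk b :&: A| - 1).
Proof.
rewrite /TA (big_nth set0) big_mkord big_mkcond; apply: eq_bigr => b _.
case: ifP => // /negbT; rewrite -leqNgt => H; apply/esym/eqP; by rewrite subn_eq0.
Qed.

Variables (lam r : nat).
Hypothesis HB : is_BIBD lam r blocks.

Lemma Bk_card b : #|Bk b| = r.
Proof. by case: HB => H _; apply: H; rewrite mem_nth. Qed.

Lemma rep x : \sum_(b < N | x \in Bk b) (#|Bk b| - 1) = lam * (n - 1).
Proof.
transitivity (\sum_(b < N | x \in Bk b) \sum_(y | y != x) ((y \in Bk b) : nat)).
  apply: eq_bigr => b Hb; rewrite (cardsD1 x) Hb add1n subSS subn0 -sum1_card.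
  rewrite big_mkcond [RHS]big_mkcond; apply: eq_bigr => y _; rewrite !inE.
  by case: (y == x); case: (y \in Bk b).
rewrite exchange_big /=.
transitivity (\sum_(y | y != x) lam).
  apply: eq_bigr => y Hy; case: HB => _ /(_ x y); rewrite eq_sym => /(_ Hy) <-.
  rewrite count_ord big_mkcondr /=; apply: eq_bigr => b _.
  by case: (y \in Bk b).
rewrite sum_nat_cond_const mulnC; congr (_ * _).
have -> : [set y | y != x] = [set~ x] by apply/setP => y; rewrite !inE.
by rewrite cardsC1 card_ord subn1.
Qed.

Lemma size_Lst x : size (Lst x) * (r - 1) = lam * (n - 1).
Proof.
rewrite -(rep x) size_filter count_enum big_distrl /=.
by apply: eq_bigr => b _; rewrite Bk_card mul1n.
Qed.

Lemma sum_blocks : (\sum_(b < N) (#|Bk b| - 1)) * r = lam * n * (n - 1).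
Proof.
transitivity (\sum_x \sum_(b < N | x \in Bk b) (#|Bk b| - 1)).
  rewrite (exchange_big_dep xpredT) //= big_distrl /=; apply: eq_bigr => b _.
  rewrite sum_nat_cond_const mulnC; congr (_ * _).
  rewrite -(Bk_card b); apply: eq_card => y; by rewrite !inE.
under eq_bigr do rewrite rep.
by rewrite sum_nat_const card_ord mulnA [n * lam]mulnC.
Qed.
End Count.

Section Code.
Local Open Scope ring_scope.
Variables (F : finFieldType) (n : nat) (blocks : seq {set 'I_n}).
Local Notation N := (size blocks).
Local Notation Bk := (@Bk n blocks).
Local Notation Lst := (Lst blocks).
Definition lp (b : 'I_N) : option 'I_n := [pick x in Bk b].
Definition Free := [set p : 'I_N * 'I_n | (p.2 \in Bk p.1) && (Some p.2 != lp p.1)].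
Definition FT := {p : 'I_N * 'I_n | p \in Free}.
Local Notation D := #|{: FT}|.

Definition coef (b : 'I_N) (x : 'I_n) (t : 'I_D) : F :=
  let p := val (enum_val t) in
  if x \in Bk b then
    (if Some x == lp b then (if p.1 == b then -1 else 0) else (p == (b, x))%:R)
  else 0.
Definition cvec b x : 'cV[F]_D := \col_t coef b x t.
Definition cf (f : 'rV[F]_D) b x : F := (f *m cvec b x) 0 0.

Lemma mxBE m k (A B : 'M[F]_(m, k)) i j : (A - B) i j = A i j - B i j.
Proof. by rewrite !mxE. Qed.

Lemma cfB f g b x : cf (f - g) b x = cf f b x - cf g b x.
Proof. by rewrite /cf mulmxBl mxBE. Qed.

Lemma cfZ a f b x : cf (a *: f) b x = a * cf f b x.
Proof. by rewrite /cf -scalemxAl mxE. Qed.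

Lemma cfE f b x : cf f b x = \sum_t f 0 t * coef b x t.
Proof. by rewrite /cf mxE; apply: eq_bigr => t _; rewrite mxE. Qed.

Lemma cf_out f b x : x \notin Bk b -> cf f b x = 0.
Proof. by move=> H; rewrite cfE big1 // => t _; rewrite /coef (negbTE H) mulr0. Qed.

Lemma cf_free f t :
  cf f (val (enum_val t)).1 (val (enum_val t)).2 = f 0 t.
Proof.
have := valP (enum_val t); rewrite inE => /andP[Hin Hnl].
rewrite cfE (bigD1 t) //= big1 ?addr0.
  by rewrite /coef Hin (negbTE Hnl) -surjective_pairing eqxx mulr1.
move=> t' Ht'; rewrite /coef Hin (negbTE Hnl) -surjective_pairing.
case: eqP => [/val_inj/enum_val_inj E|_]; last by rewrite mulr0.
by rewrite E eqxx in Ht'.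
Qed.

Lemma cf_inj f : (forall b x, x \in Bk b -> cf f b x = 0) -> f = 0.
Proof.
move=> H; apply/rowP => t; rewrite mxE -cf_free; apply: H.
by have := valP (enum_val t); rewrite inE => /andP[].
Qed.

Lemma coef_nl b x t : x \in Bk b -> Some x != lp b ->
  coef b x t = (val (enum_val t) == (b, x))%:R.
Proof. by move=> Hx Hn; rewrite /coef Hx (negbTE Hn). Qed.

Lemma coef_l b x t : x \in Bk b -> Some x = lp b ->
  coef b x t = if (val (enum_val t)).1 == b then -1 else 0.
Proof. by move=> Hx Hn; rewrite /coef Hx Hn eqxx. Qed.

Lemma pair_eq1 (A B : eqType) (p : A * B) y : (p == (p.1, y)) = (p.2 == y).
Proof. by case: p => a c; rewrite xpair_eqE eqxx. Qed.
Lemma pair_neq1 (A B : eqType) (p : A * B) a y : p.1 <> a -> (p == (a, y)) = false.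
Proof. by case: p => a' c /= H; rewrite xpair_eqE (introF eqP H). Qed.

Lemma cf_sum f b : \sum_(x in Bk b) cf f b x = 0.
Proof.
under eq_bigr do rewrite cfE.
rewrite exchange_big big1 // => t _.
rewrite -mulr_sumr.
have := valP (enum_val t); rewrite inE => /andP[Hin Hnl].
set p := val (enum_val t) in Hin Hnl *.
case E: (lp b) => [l|]; last first.
  have H0 : forall x, (x \in Bk b) = false.
    by move: E; rewrite /lp; case: pickP.
  by rewrite big_pred0 ?mulr0 // => x; rewrite H0.
have Hl : l \in Bk b by move: E; rewrite /lp; case: pickP => // ? ? [<-].
rewrite (bigD1 l) //= coef_l // -/p.
under eq_bigr => x /andP[Hx Hxl] do rewrite coef_nl ?E ?(inj_eq (@Some_inj _)) // -/p.
case: eqP => [Hp1|Hp1].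
  rewrite (bigD1 p.2) /=; last first.
    rewrite -Hp1 Hin /=; apply/eqP => Hx; move/eqP: Hnl; apply.
    by rewrite Hx Hp1 E.
  rewrite -Hp1 -surjective_pairing eqxx big1 ?addr0 ?addNr ?mulr0 //.
  by move=> x /andP[_ Hx]; rewrite pair_eq1 eq_sym (negbTE Hx).
rewrite add0r big1 ?mulr0 // => x _.
by rewrite pair_neq1.
Qed.

Definition Wset (A : {set 'I_n}) := [set f : 'rV[F]_D |
  [forall b, forall x, ((x \notin A) && (x \in Bk b)) ==> (cf f b x == 0)]].
Definition Sset (A : {set 'I_n}) := [set p : 'I_N * 'I_n |
  (p.2 \in Bk p.1 :&: A) && (Some p.2 != [pick y in Bk p.1 :&: A])].

Lemma WsetP (A : {set 'I_n}) f : reflect (forall b x, x \notin A -> x \in Bk b -> cf f b x = 0) (f \in Wset A).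
Proof.
rewrite inE; apply: (iffP forallP) => [H b x Hx Hb|H b].
  by have /forallP/(_ x) := H b; rewrite Hx Hb => /eqP.
by apply/forallP => x; apply/implyP => /andP[Hx Hb]; rewrite H.
Qed.

Lemma WZ (A : {set 'I_n}) a f : f \in Wset A -> a *: f \in Wset A.
Proof. by move/WsetP=> H; apply/WsetP => b x Hx Hb; rewrite cfZ H ?mulr0. Qed.

Lemma cf0 b x : cf 0 b x = 0.
Proof. by rewrite /cf mul0mx mxE. Qed.

Lemma W0 (A : {set 'I_n}) : 0 \in Wset A.
Proof. by apply/WsetP => b x _ _; rewrite cf0. Qed.

Lemma card_W (A : {set 'I_n}) : (#|Wset A| <= #|F| ^ #|Sset A|)%N.
Proof.
pose phi f := [ffun s : {p | p \in Sset A} => cf f (val s).1 (val s).2].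
have inj : {in Wset A &, injective phi}.
  move=> f g /WsetP Hf /WsetP Hg /ffunP Heq.
  apply/eqP; rewrite -subr_eq0; apply/eqP; apply: cf_inj => b x Hx.
  have claim : forall y, y \in Bk b -> (y \notin A) || (Some y != [pick z in Bk b :&: A]) ->
      cf (f - g) b y = 0.
    move=> y Hy; case HyA: (y \in A) => /= Hp; last by rewrite cfB Hf ?Hg ?HyA ?subrr.
    have HS : (b, y) \in Sset A by rewrite inE /= inE Hy HyA Hp.
    by have := Heq (Sub (b, y) HS); rewrite !ffunE /= cfB => ->; rewrite subrr.
  case HxA: (x \in A); last by rewrite claim ?HxA.
  case Hp: (Some x != [pick z in Bk b :&: A]); first by rewrite claim ?Hp ?orbT.
  have := cf_sum (f - g) b; rewrite (bigD1 x) //= big1 ?addr0 // => y /andP[Hy Hyx].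
  apply: claim => //; apply/orP; right; move/negbFE: Hp => /eqP <-.
  by rewrite (inj_eq (@Some_inj _)).
rewrite -(card_in_imset inj).
apply: leq_trans (subset_leq_card (subsetT _)) _.
by rewrite cardsT card_ffun card_sig.
Qed.

Lemma sum_pick (T : finType) (C : {set T}) :
  (\sum_x ((x \in C) && (Some x != [pick y in C])) = #|C| - 1)%N.
Proof.
case: pickP => [l Hl|H0]; last first.
  rewrite big1 => [|x _]; last by rewrite H0.
  by rewrite (_ : C = set0) ?cards0 //; apply/setP => x; rewrite H0 inE.
rewrite (cardsD1 l C) Hl add1n subSS subn0 -sum1_card [RHS]big_mkcond /=.
apply: eq_bigr => x _; rewrite !inE (inj_eq (@Some_inj _)).
by case: (x \in C); case: (x == l).
Qed.

Lemma card_pairs (C : 'I_N -> {set 'I_n}) :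
  #|[set p : 'I_N * 'I_n | (p.2 \in C p.1) && (Some p.2 != [pick y in C p.1])]|
  = (\sum_(b < N) (#|C b| - 1))%N.
Proof.
rewrite -sum1_card [LHS]big_mkcond /=.
transitivity (\sum_b \sum_x (if (b, x) \in
   [set p : 'I_N * 'I_n | (p.2 \in C p.1) && (Some p.2 != [pick y in C p.1])] then 1 else 0))%N.
  by rewrite pair_bigA; apply: eq_bigr => -[b x].
apply: eq_bigr => b _; rewrite -sum_pick; apply: eq_bigr => x _.
by rewrite inE /=; case: ifP.
Qed.

Lemma card_S (A : {set 'I_n}) : #|Sset A| = (\sum_(b < N) (#|Bk b :&: A| - 1))%N.
Proof. exact: (card_pairs (fun b => Bk b :&: A)). Qed.

Lemma card_Free : #|Free| = (\sum_(b < N) (#|Bk b| - 1))%N.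
Proof. exact: (card_pairs Bk). Qed.

Definition Vm (b0 : 'I_N) (al : nat) (x : 'I_n) : 'M[F]_(D, al) :=
  \matrix_(t, p) coef (nth b0 (Lst x) p) x t.

Lemma Vm_entry b0 al x (f : 'rV[F]_D) (p : 'I_al) :
  (f *m Vm b0 al x) 0 p = cf f (nth b0 (Lst x) p) x.
Proof. by rewrite cfE mxE; apply: eq_bigr => t _; rewrite mxE. Qed.

End Code.

Lemma mxBE' (F : finFieldType) m k (A B : 'M[F]_(m, k)) i j : (A - B)%R i j = (A i j - B i j)%R.
Proof. by rewrite !mxE. Qed.

Theorem mainTheorem3 (n r lam k : nat) (blocks : seq {set 'I_n})
  (q : nat) (F : finFieldType) :
  (2 <= n)%N -> (2 <= r <= n)%N -> (1 <= lam)%N -> (1 <= k <= n - 1)%N ->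
  is_BIBD lam r blocks ->
  #|F| = q ->
  ('C(n, k) * Tmax k blocks * M_par r lam k blocks < q)%N ->
  exists G : 'I_n -> 'M[F]_(M_par r lam k blocks, alpha_par n r lam),
    regenerating_code k (n - 1) lam G /\ uncoded_repair (n - 1) lam G.
Proof.
move=> Hn /andP[Hr2 Hrn] Hlam /andP[Hk1 Hkn] HB Hq Hbig.
set T := Tmax k blocks in Hbig *.
set Mp := M_par r lam k blocks in Hbig *.
set al := alpha_par n r lam.
set D := #|{: FT blocks}|.
have q1 : 1 < q by rewrite -Hq finNzRing_gt1.
have HD : D = lam * n * (n - 1) %/ r.
  by rewrite -(sum_blocks HB) -card_Free mulnK ?(leq_trans _ Hr2) // /D card_sig.
have HMp : Mp = D - T by rewrite /Mp /M_par HD.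
have Hal x : size (Lst blocks x) = al.
  by rewrite /al /alpha_par -(size_Lst HB x) mulnK // subn_gt0.
have N0 : 0 < size blocks.
  have [_ H] := HB; have := H (Ordinal (ltn_trans (ltnSn 0) Hn)) (Ordinal Hn) isT.
  move=> Hc; rewrite lt0n; apply/eqP => /size0nil E0.
  by move: Hc; rewrite E0 /= => Hc; rewrite -Hc in Hlam.
pose b0 := Ordinal N0.
have HTA (A : {set 'I_n}) : #|A| = n - k -> #|Sset blocks A| <= T.
  move=> HA; rewrite card_S -TA_ord /T /Tmax.
  by apply: leq_bigmax_cond; rewrite HA.
have [E HE] : exists E : 'M[F]_(Mp, D), forall A : {set 'I_n}, #|A| = n - k ->
    forall u : 'rV[F]_Mp, (u *m E)%R \in Wset F blocks A -> u = 0%R.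
  have [T0|Tpos] := posnP T.
    have [E HE] : exists E : 'M[F]_(Mp, D), forall (i : 'I_1) (u : 'rV[F]_Mp),
        (u *m E)%R \in (fun _ => [set (0 : 'rV[F]_D)%R]) i -> u = 0%R.
      apply: greedy.
        by move=> _ a x; rewrite !inE => /eqP ->; rewrite GRing.scaler0.
      move=> s Hs; rewrite big_ord1 cards1 muln1 ltn_exp2l ?Hq //.
      by move: Hs; rewrite HMp T0 subn0.
    exists E => A HA u Hu; apply: (HE ord0); rewrite inE; apply/eqP.
    have : #|Wset F blocks A| <= 1.
      apply: leq_trans (card_W F blocks A) _.
      by have := HTA A HA; rewrite T0 leqn0 => /eqP ->.
    by move/card_le1_eqP => /(_ _ _ Hu (W0 F blocks A)).
  have [E HE] : exists E : 'M[F]_(Mp, D), forall (A : {set 'I_n}) (u : 'rV[F]_Mp),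
        (u *m E)%R \in (fun A : {set 'I_n} => if #|A| == n - k then Wset F blocks A else set0) A -> u = 0%R.
    apply: greedy.
      move=> A a x; case: ifP => _; first exact: WZ.
      by rewrite inE.
    move=> s Hs.
    rewrite (bigID (fun A : {set 'I_n} => #|A| == n - k)) /= [X in (_ + X)%N]big1 ?addn0; last first.
      by move=> A HA; rewrite /= (negbTE HA) cards0 muln0.
    apply: (@leq_ltn_trans (\sum_(A : {set 'I_n} | #|A| == n - k) q ^ (s + T))).
      apply: leq_sum => A /eqP HA; rewrite HA eqxx expnD -Hq leq_mul2l.
      apply/orP; right; apply: leq_trans (card_W F blocks A) _.
      by rewrite leq_pexp2l ?HTA // Hq (ltnW q1).
    rewrite sum_nat_cond_const card_draws card_ord bin_sub; last by apply: leq_trans Hkn (leq_subr _ _).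
    have Cq : 'C(n, k) < q.
      apply: leq_ltn_trans Hbig; rewrite -mulnA leq_pmulr // muln_gt0 Tpos.
      by apply: leq_ltn_trans Hs.
    apply: (@leq_trans (q ^ (s + T).+1)); first by rewrite expnS ltn_pmul2r // expn_gt0 (ltnW q1).
    rewrite -Hq leq_pexp2l ?Hq ?(ltnW q1) //.
    by move: Hs; rewrite HMp; lia.
  exists E => A HA u Hu; apply: (HE A); by rewrite HA eqxx.
pose G (i : 'I_n) : 'M[F]_(Mp, al) := (E *m Vm F b0 al i)%R.
have diffE (m m' : 'rV[F]_Mp) i p : ((m *m G i) 0%R p - (m' *m G i) 0%R p)%R
    = (((m - m') *m E) *m Vm F b0 al i)%R 0%R p.
  by rewrite -mxBE' -mulmxBl mulmxA.
have Hrec : recoverable k G.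
  move=> K HK m m' Hc.
  have HA : #|~: K| = n - k by have := cardsC K; rewrite card_ord HK; lia.
  apply/eqP; rewrite -GRing.subr_eq0; apply/eqP; apply: (HE _ HA).
  apply/WsetP => b x HxA Hxb.
  have HxK : x \in K by move: HxA; rewrite inE negbK.
  have Hbx : b \in Lst blocks x by rewrite mem_filter Hxb mem_enum.
  have Hp : index b (Lst blocks x) < al by rewrite -(Hal x) index_mem.
  have := Hc x HxK; rewrite /content => /rowP /(_ (Ordinal Hp)) /eqP.
  rewrite -GRing.subr_eq0 diffE Vm_entry /= nth_index //.
  by move/eqP.
have Hle : lam <= al.
  rewrite -(@leq_pmul2r (r - 1)) ?subn_gt0 // -(Hal (Ordinal (ltnW Hn))) (size_Lst HB).
  by rewrite leq_mul2l leq_sub2r // orbT.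
have Hunc : uncoded_repair (n - 1) lam G.
  move=> j A' HA' HjA'.
  have allin : forall x, x != j -> x \in A'.
    have sub : A' \subset [set~ j].
      by apply/subsetP => y Hy; rewrite !inE; apply: contraNneq HjA' => <-.
    have Hc : #|A'| = #|[set~ j]| by rewrite cardsC1 card_ord HA' subn1.
    move=> x Hx; have := (subset_cardP Hc sub) x; rewrite !inE Hx => ->; done.
  pose L2 (x : 'I_n) := [seq b <- enum 'I_(size blocks) | (x \in Bk b) && (j \in Bk b)].
  have sizeL2 x : x != j -> size (L2 x) = lam.
    move=> Hx; rewrite size_filter count_enum.
    case: HB => _ /(_ x j Hx) <-; by rewrite count_ord.
  have uniqL2 x : uniq (L2 x) by rewrite filter_uniq // enum_uniq.
  pose sel (x : 'I_n) (t : 'I_lam) : 'I_al := if x == j then widen_ord Hle t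
    else insubd (widen_ord Hle t) (index (nth b0 (L2 x) t) (Lst blocks x)).
  have selv x t : x != j -> val (sel x t) = index (nth b0 (L2 x) t) (Lst blocks x).
    move=> Hx; rewrite /sel (negbTE Hx) val_insubd.
    have Ht : t < size (L2 x) by rewrite sizeL2.
    have := mem_nth b0 Ht; rewrite mem_filter => /andP[/andP[Hxb _] _].
    have Hm : nth b0 (L2 x) t \in Lst blocks x by rewrite mem_filter Hxb mem_enum.
    have Hi : index (nth b0 (L2 x) t) (Lst blocks x) < al by rewrite -(Hal x) index_mem.
    by rewrite Hi.
  exists sel; split.
    move=> x t1 t2; case: (eqVneq x j) => [->|Hx].
      by rewrite /sel eqxx => /(congr1 val) /= /val_inj.
    move=> /(congr1 val); rewrite !selv //.
    have Ht1 : t1 < size (L2 x) by rewrite sizeL2.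
    have Ht2 : t2 < size (L2 x) by rewrite sizeL2.
    have mem t : t < size (L2 x) -> nth b0 (L2 x) t \in Lst blocks x.
      move=> Ht; have := mem_nth b0 Ht; rewrite mem_filter => /andP[/andP[Hxb _] _].
      by rewrite mem_filter Hxb mem_enum.
    move=> /(congr1 (nth b0 (Lst blocks x))); rewrite !nth_index ?mem //.
    by move/eqP; rewrite nth_uniq // => /eqP /val_inj.
  move=> m m' Hsel; apply/rowP => p; apply/eqP; rewrite -GRing.subr_eq0.
  rewrite /content diffE Vm_entry.
  set f := ((m - m') *m E)%R.
  set b := nth b0 (Lst blocks j) p.
  have Hjb : j \in Bk b.
    have Hp : p < size (Lst blocks j) by rewrite Hal.
    by have := mem_nth b0 Hp; rewrite mem_filter => /andP[].
  have := cf_sum f b; rewrite (bigD1 j) //= big1 ?GRing.addr0 => [->//|y /andP[Hy Hyj]].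
  have HyA : y \in A' by apply: allin.
  have Hb2 : b \in L2 y by rewrite mem_filter Hy Hjb mem_enum.
  have Ht : index b (L2 y) < lam by rewrite -(sizeL2 y Hyj) index_mem.
  have := Hsel y HyA (Ordinal Ht); move/eqP; rewrite -GRing.subr_eq0 diffE Vm_entry.
  rewrite selv //= nth_index // nth_index; first by move/eqP.
  all: first [exact: Hb2 | by rewrite mem_filter Hy mem_enum | idtac].
exists G; split => //; split => //.
move=> j A' HA' HjA'.
have [sel [_ Hs]] := Hunc j A' HA' HjA'.
exists (fun i => (\matrix_(p, t) ((p == sel i t)%:R : F) : 'M[F]_(al, lam))%R).
move=> m m' H; apply: Hs => i Hi t.
have selE (v : 'rV[F]_al) : (v *m (\matrix_(p, t) ((p == sel i t)%:R : F) : 'M[F]_(al, lam))%R)%R 0%R t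
    = v 0%R (sel i t).
  rewrite mxE (bigD1 (sel i t)) //= big1 ?GRing.addr0.
    by rewrite mxE eqxx GRing.mulr1.
  by move=> p Hp; rewrite mxE (negbTE Hp) GRing.mulr0.
by move/rowP: (H i Hi) => /(_ t); rewrite !selE.
Qed.
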